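(* For every constant $\alpha>1$, any stable approximation scheme (SAS) for the dynamic broadcast range-assignment problem in $\mathbb{R}^1$ with distance-power gradient $\alpha$ must have stability parameter $k(\varepsilon)=\Omega\big((1/\varepsilon)^{1/(\alpha-1)}\big)$.
   Context: Broadcast range-assignment problem: $P$ is a finite set of points in $\mathbb{R}^1$ containing a designated source $s$. A range assignment $\rho$ gives each $p\in P$ a range $\rho(p)\ge 0$; it induces the directed communication graph on $P$ with an edge $(p,q)$ iff $|pq|\le\rho(p)$. The assignment is feasible if this graph contains an arborescence rooted at $s$ spanning $P$. Its cost is $\sum_{p\in P}\rho(p)^\alpha$, $\alpha>1$; $\mathrm{OPT}(P)$ is the minimum cost of a feasible assignment. In the dynamic version, points other than $s$ are inserted into and deleted from $P$. An update algorithm, given the current assignment and the update, outputs a feasible assignment for the updated set. The range of a point not in the current set is $0$. An update algorithm is $k$-stable if each insertion or deletion modifies at most $k$ ranges. A stable approximation scheme (SAS) is an update algorithm that, for any given fixed $\varepsilon>0$, is $k(\varepsilon)$-stable and after every update has cost at most $(1+\varepsilon)\mathrm{OPT}(P)$, where $k(\varepsilon)$ depends only on $\varepsilon$ and not on $|P|$. *)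

(* Defs.v *)
From HB Require Import structures.
From mathcomp Require Import all_boot all_order all_algebra.
From mathcomp Require Import finmap.
From mathcomp Require Import all_classical all_reals all_analysis.
Set Implicit Arguments. Unset Strict Implicit. Unset Printing Implicit Defensive.
Import Order.TTheory GRing.Theory Num.Theory.
Local Open Scope ring_scope.
Local Open Scope fset_scope.

Section Broadcast.
Variable R : realType.

Definition range_assignment (P : {fset R}) (rho : R -> R) : Prop :=
  (forall p, 0 <= rho p) /\ (forall p, p \notin P -> rho p = 0).

(* The communication graph has an edge (p,q) (p,q in P) iff |p - q| <= rho p.
   A spanning arborescence rooted at s is given by a parent map [par]:
   every p in P other than s has its parent par p in P with an edge
   (par p, p), and following parents from any p in P leads to s. *)
Definition has_arborescence (s : R) (P : {fset R}) (rho : R -> R) : Prop :=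
  exists par : R -> R,
    (forall p, p \in P -> p != s ->
        par p \in P /\ `|par p - p| <= rho (par p)) /\
    (forall p, p \in P -> exists n : nat, iter n par p = s).

Definition feasible (s : R) (P : {fset R}) (rho : R -> R) : Prop :=
  range_assignment P rho /\ has_arborescence s P rho.

Definition cost (alpha : R) (P : {fset R}) (rho : R -> R) : R :=
  \sum_(p <- P) (rho p) `^ alpha.

Definition OPT (s alpha : R) (P : {fset R}) : R :=
  inf [set cost alpha P rho | rho in [set rho | feasible s P rho]].

Inductive update := Ins of R | Del of R.

Definition valid_update (s : R) (P : {fset R}) (u : update) : Prop :=
  match u with
  | Ins x => x \notin P
  | Del x => x \in P /\ x != s
  end.

Definition apply_update (P : {fset R}) (u : update) : {fset R} :=
  match u with
  | Ins x => x |` P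
  | Del x => P `\ x
  end.

Definition update_algorithm := {fset R} -> (R -> R) -> update -> (R -> R).

Inductive reachable (s : R) (A : update_algorithm) :
    {fset R} -> (R -> R) -> Prop :=
  | reach_init : reachable s A [fset s] (fun _ => 0)
  | reach_step P rho u : reachable s A P rho -> valid_update s P u ->
      reachable s A (apply_update P u) (A P rho u).

Definition modifies_at_most (k : nat) (rho rho' : R -> R) : Prop :=
  exists D : {fset R}, (#|` D| <= k)%N /\ (forall p, p \notin D -> rho' p = rho p).

Definition stable_approx (s alpha eps : R) (k : nat) (A : update_algorithm)
    : Prop :=
  forall P rho u, reachable s A P rho -> valid_update s P u ->
    let P' := apply_update P u in
    let rho' := A P rho u in
    [/\ feasible s P' rho',
        modifies_at_most k rho rho' &
        cost alpha P' rho' <= (1 + eps) * OPT s alpha P'].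

Definition SAS (s alpha : R) (A : R -> update_algorithm) (k : R -> nat) : Prop :=
  forall eps, 0 < eps -> stable_approx s alpha eps (k eps) (A eps).

End Broadcast.

(* Main.v *)
Require Import Defs.
From HB Require Import structures.
From mathcomp Require Import all_boot all_order all_algebra.
From mathcomp Require Import finmap.
From mathcomp Require Import all_classical all_reals all_analysis.
From mathcomp Require Import ring lra zify.
Import Order.TTheory GRing.Theory Num.Theory.
Local Open Scope ring_scope.

Set Implicit Arguments. Unset Strict Implicit. Unset Printing Implicit Defensive.

Section Aux.
Variable R : realType.
Variable s : R.

Fixpoint Pn (m : nat) : {fset R} :=
  match m with 0 => [fset s]%fset | m'.+1 => ((s + m'.+1%:R)%R |` Pn m')%fset end.

Lemma in_Pn m x : x \in Pn m <-> exists i, (i <= m)%N /\ x = s + i%:R.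
Proof.
elim: m x => [|m IH] x /=.
  rewrite in_fset1; split; first by move/eqP => ->; exists 0%N; rewrite addr0.
  by case=> i [Hi ->]; move: Hi; rewrite leqn0 => /eqP ->; rewrite addr0.
rewrite !inE; split.
  case/orP; first by move/eqP => ->; exists m.+1.
  by case/IH => i [Hi ->]; exists i; split => //; apply: leqW.
case=> i [Hi ->]; move: Hi; rewrite leq_eqVlt => /orP [/eqP ->|Hi].
  by rewrite eqxx.
by apply/orP; right; apply/IH; exists i.
Qed.

Lemma notin_Pn m : s + m.+1%:R \notin Pn m.
Proof.
apply/negP => /in_Pn [i [Hi /eqP]]; rewrite (inj_eq (addrI s)) eqr_nat => /eqP E.
by move: Hi; rewrite -E ltnn.
Qed.

Lemma sum_Pn m (f : R -> R) : \sum_(p <- Pn m) f p = \sum_(i < m.+1) f (s + i%:R).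
Proof.
elim: m => [|m IH] /=; first by rewrite big_seq_fset1 big_ord1 /= addr0.
by rewrite big_fsetU1 ?notin_Pn // IH [in RHS]big_ord_recr /= addrC.
Qed.

Lemma OPT_le alpha P rho : feasible s P rho -> OPT s alpha P <= cost alpha P rho.
Proof.
move=> Hf; rewrite /OPT; apply: ge_inf; last by exists rho.
exists 0 => y [r _ <-]; rewrite /cost; apply: sumr_ge0 => p _; exact: powR_ge0.
Qed.

Lemma Pn_chain alpha n : alpha != 0 -> OPT s alpha (Pn n) <= n%:R.
Proof.
move=> a0.
pose rho0 p : R := if (p \in Pn n) && (p != s + n%:R) then 1 else 0.
have -> : n%:R = cost alpha (Pn n) rho0.
  rewrite /cost sum_Pn big_ord_recr /= /rho0 eqxx andbF powR0 // addr0.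
  rewrite (eq_bigr (fun _ => 1)); first by rewrite sumr_const card_ord.
  move=> i _; have -> : (s + (i : nat)%:R \in Pn n) by apply/in_Pn; exists i; split => //; exact: ltnW.
  rewrite (inj_eq (addrI s)) eqr_nat neq_ltn ltn_ord /=; by rewrite powR1.
apply: OPT_le; split.
  split; first by move=> p; rewrite /rho0; case: ifP.
  by move=> p /negbTE Hp; rewrite /rho0 Hp.
exists (fun p => p - 1); split.
  move=> p /in_Pn [i [Hi ->]] Hs.
  have i0 : (0 < i)%N by rewrite lt0n; apply: contra Hs => /eqP ->; rewrite addr0.
  have E : s + i%:R - 1 = s + i.-1%:R by rewrite -{1}(prednK i0) -addn1 natrD; lra.
  rewrite E; have Hin : s + i.-1%:R \in Pn n by apply/in_Pn; exists i.-1; split => //; apply: leq_trans Hi; exact: leq_pred.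
  split => //; rewrite /rho0 Hin (inj_eq (addrI s)) eqr_nat /=.
  have -> : (i.-1 != n) by rewrite neq_ltn; apply/orP; left; rewrite prednK.
  rewrite -E; have -> : s + i%:R - 1 - (s + i%:R) = -1 by lra.
  by rewrite normrN normr1.
move=> p /in_Pn [i [_ ->]]; exists i; elim: i => [|i IH]; first by rewrite /= addr0.
by rewrite iterSr -{2}IH; congr iter; rewrite -addn1 natrD; lra.
Qed.

Lemma star_OPT alpha n : alpha != 0 -> (0 < n)%N ->
  OPT s alpha ((s - n%:R)%R |` Pn n)%fset <= n%:R `^ alpha.
Proof.
move=> a0 n0.
have Hnot : s - n%:R \notin Pn n.
  apply/negP => /in_Pn [i [_ /eqP]]; rewrite -subr_eq0.
  have -> : s - n%:R - (s + i%:R) = - (n + i)%:R by rewrite natrD; lra.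
  by rewrite oppr_eq0 pnatr_eq0 addn_eq0 => /andP [/eqP E _]; move: n0; rewrite E.
pose rho1 p : R := if p == s then n%:R else 0.
have -> : n%:R `^ alpha = cost alpha ((s - n%:R)%R |` Pn n)%fset rho1.
  rewrite /cost big_fsetU1 // sum_Pn big_ord_recl /= addr0 /rho1 eqxx.
  have -> : (s - n%:R == s) = false.
    by apply/negbTE; rewrite -subr_eq0 addrAC subrr add0r oppr_eq0 pnatr_eq0 -lt0n.
  rewrite powR0 // add0r big1 ?addr0 // => i _.
  have -> : (s + (bump 0 i)%:R == s) = false.
    by apply/negbTE; rewrite -subr_eq0 addrAC subrr add0r pnatr_eq0.
  by rewrite powR0.
apply: OPT_le; split.
  split; first by move=> p; rewrite /rho1; case: ifP.
  move=> p Hp; rewrite /rho1; case: eqP => // E; move: Hp; rewrite E !inE.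
  by rewrite (_ : s \in Pn n) ?orbT //; apply/in_Pn; exists 0%N; rewrite addr0.
exists (fun _ => s); split; last by move=> p _; exists 1%N.
move=> p Hp Hs; split.
  by rewrite !inE; apply/orP; right; apply/in_Pn; exists 0%N; rewrite addr0.
rewrite /rho1 eqxx; move: Hp; rewrite !inE => /orP [/eqP ->|/in_Pn [i [Hi ->]]].
  by rewrite opprB addrC subrK ger0_norm.
rewrite opprD addrA subrr add0r normrN ger0_norm // ler_nat //.
Qed.


Lemma coverage n rho : has_arborescence s (Pn n) rho ->
  forall i, (i < n)%N -> exists j, (j <= i)%N /\ (i.+1 - j)%:R <= rho (s + j%:R).
Proof.
case=> par [Hpar Hit] i Hi.
have Hq : s + i.+1%:R \in Pn n by apply/in_Pn; exists i.+1.
have [m Hm] := Hit _ Hq.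
have Hlt : s + i%:R < s + i.+1%:R by rewrite ltrD2l ltr_nat.
move: Hlt Hm Hq; move: (s + i.+1%:R) => q.
elim: m q => [|m IH] q Hlt Hm Hq.
  by move: Hlt; rewrite /= in Hm; rewrite Hm -{2}(addr0 s) ltrD2l ltNge ler0n.
have Hqs : q != s by apply/negP => /eqP E; move: Hlt; rewrite E -{2}(addr0 s) ltrD2l ltNge ler0n.
have [Hpq Hedge] := Hpar _ Hq Hqs.
rewrite iterSr in Hm.
case: (ltP (s + i%:R) (par q)) => Hc; first exact: IH _ Hc Hm Hpq.
move: Hq Hlt Hedge Hpq Hc => /in_Pn [j' [_ ->]] Hlt Hedge Hpq Hc.
move: Hpq Hedge Hc => /in_Pn [j [_ ->]] Hedge Hc.
rewrite lerD2l ler_nat in Hc; rewrite ltrD2l ltr_nat in Hlt.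
exists j; split => //; apply: le_trans Hedge.
rewrite natrB; last by apply: leqW.
have -> : s + j%:R - (s + j'%:R) = - (j'%:R - j%:R) by lra.
rewrite normrN ger0_norm; last by rewrite subr_ge0 ler_nat; apply: leq_trans Hc (ltnW Hlt).
by rewrite lerD2r ler_nat.
Qed.

Definition covn n (r : nat -> R) j : nat :=
  \sum_(i < n) ((j <= i)%N && ((i.+1 - j)%:R <= r j)%R).

Lemma covn_le n r j : 0 <= r j -> (covn n r j)%:R <= r j /\ (covn n r j <= n - j)%N.
Proof.
move=> r0; rewrite /covn; elim: n => [|n [IH1 IH2]].
  by rewrite big_ord0; split.
rewrite big_ord_recr /=.
set b := (X in (_ + nat_of_bool X)%N); case Hb: b.
  case/andP: Hb => H1 H2; split.
    apply: le_trans H2; rewrite ler_nat addn1; apply: leq_trans (_ : (n - j).+1 <= _)%N.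
      by rewrite ltnS.
    by rewrite subSn.
  by rewrite addn1 subSn // ltnS.
by rewrite addn0; split => //; apply: leq_trans IH2 _; apply: leq_sub2r.
Qed.

Lemma cov_sum n r : (forall i, (i < n)%N -> exists j, (j <= i)%N /\ (i.+1 - j)%:R <= r j) ->
  (n <= \sum_(j < n.+1) covn n r j)%N.
Proof.
move=> H; rewrite /covn exchange_big /=.
rewrite -{1}(card_ord n) -sum1_card; apply: leq_sum => i _.
have [j [Hj Hr]] := H i (ltn_ord i).
have jn : (j < n.+1)%N by have := ltn_ord i; lia.
rewrite (bigD1 (Ordinal jn)) //= Hj Hr /=; exact: leq_addr.
Qed.


Lemma delta_gt0 (alpha : R) : 1 < alpha -> 0 < 2 `^ (alpha - 1) - 1.
Proof.
move=> a1; rewrite subr_gt0 lt_neqAle; apply/andP; split.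
  rewrite eq_sym powR_eq1 negb_or; apply/andP; split; first by apply/eqP; lra.
  by rewrite negb_or -leNgt ler0n /=; apply/eqP; lra.
by rewrite -{1}(powRr0 2); apply: ler_powR; lra.
Qed.

Lemma point_ineq (alpha : R) (c : nat) (r : R) : 1 < alpha -> 0 <= r -> c%:R <= r ->
  c%:R <= r `^ alpha /\ c%:R <= 1 + (r `^ alpha - c%:R) / (2 `^ (alpha - 1) - 1).
Proof.
move=> a1 r0 cr.
have d0 := delta_gt0 a1.
case: c cr => [|c] cr.
  split; first exact: powR_ge0.
  have hp := powR_ge0 r alpha.
  have : 0 <= (r `^ alpha - 0%:R) / (2 `^ (alpha - 1) - 1) by rewrite subr0; apply: divr_ge0 => //; apply: ltW.
  lra.
have c1 : 1 <= c.+1%:R :> R by rewrite ler1n.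
have H1 : c.+1%:R `^ alpha <= r `^ alpha.
  by apply: ge0_ler_powR => //; [lra|rewrite nnegrE ler0n].
have H2 : c.+1%:R `^ alpha = c.+1%:R * c.+1%:R `^ (alpha - 1).
  by rewrite mulr_powRB1 //; lra.
have H3 : 1 <= c.+1%:R `^ (alpha - 1) :> R.
  by rewrite -[X in X <= _](powRr0 c.+1%:R); apply: ler_powR => //; lra.
have Hge : c.+1%:R <= r `^ alpha.
  apply: le_trans H1; rewrite H2; rewrite -{1}(mulr1 c.+1%:R) ler_wpM2l //; lra.
split => //.
case: c cr c1 H1 H2 H3 Hge => [|c] cr c1 H1 H2 H3 Hge.
  by rewrite ler_wpDr // divr_ge0 //; [lra|exact: ltW].
have H4 : 2 `^ (alpha - 1) <= c.+2%:R `^ (alpha - 1).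
  apply: ge0_ler_powR => //; [lra| | |]; rewrite ?nnegrE ?ler_nat //; lra.
have H5 : c.+2%:R * (2 `^ (alpha - 1) - 1) <= r `^ alpha - c.+2%:R.
  have : c.+2%:R * 2 `^ (alpha - 1) <= c.+2%:R * c.+2%:R `^ (alpha - 1).
    by rewrite ler_wpM2l.
  lra.
apply: le_trans (_ : (r `^ alpha - c.+2%:R) / (2 `^ (alpha - 1) - 1) <= _); last first.
  by rewrite lerDr.
by rewrite ler_pdivlMr.
Qed.


Lemma count_D n (D' : {fset R}) :
  \sum_(j < n.+1) ((s + j%:R) \in D')%:R <= (#|` D'|)%:R :> R.
Proof.
rewrite -(sum_Pn n (fun p => ((p \in D')%:R : R))).
rewrite -(big_fset_incl _ (fsubsetIl (Pn n) D')); last first.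
  by move=> x Hx; rewrite in_fsetI Hx /= => /negbTE ->.
have -> : \sum_(p <- (Pn n `&` D')%fset) ((p \in D')%:R : R) = \sum_(p <- (Pn n `&` D')%fset) 1.
  by apply: eq_fbigr => x; rewrite in_fsetI => /andP [_ ->].
apply: le_trans (_ : (#|` (Pn n `&` D')%fset|)%:R <= _).
  by rewrite card_fset_sum1 natr_sum.
by rewrite ler_nat; apply: fsubset_leq_card; apply: fsubsetIr.
Qed.

Lemma notin_neg n : (0 < n)%N -> s - n%:R \notin Pn n.
Proof.
move=> n0; apply/negP => /in_Pn [i [_ /eqP]]; rewrite -subr_eq0.
have -> : s - n%:R - (s + i%:R) = - (n + i)%:R by rewrite natrD; lra.
by rewrite oppr_eq0 pnatr_eq0 addn_eq0 => /andP [/eqP E _]; move: n0; rewrite E.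
Qed.


Lemma core (alpha eps : R) (K : nat) (Ae : update_algorithm R) n :
  1 < alpha -> 0 < eps -> (0 < n)%N -> stable_approx s alpha eps K Ae ->
  n%:R <= K.+1%:R + eps * n%:R / (2 `^ (alpha - 1) - 1) + eps * n%:R `^ alpha.
Proof.
move=> a1 e0 n0 HS.
have a0 : alpha != 0 by apply/eqP; lra.
have d0 := delta_gt0 a1.
set d := 2 `^ (alpha - 1) - 1 in d0 *.
have reach : forall m, exists rho, reachable s Ae (Pn m) rho.
  elim=> [|m [rho Hr]]; first by exists (fun _ => 0); exact: reach_init.
  by exists (Ae (Pn m) rho (Ins (s + m.+1%:R))); exact: (@reach_step _ _ _ _ _ (Ins (s + m.+1%:R)) Hr (notin_Pn m)).
case: n n0 => // n' _.
have [rho' Hr'] := reach n'.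
have := HS _ _ (Ins (s + n'.+1%:R)) Hr' (notin_Pn n') => /= [[Hfeas _ Hcost]].
have Hr : reachable s Ae (Pn n'.+1) (Ae (Pn n') rho' (Ins (s + n'.+1%:R))).
  exact: (@reach_step _ _ _ _ _ (Ins (s + n'.+1%:R)) Hr' (notin_Pn n')).
move: Hfeas Hcost Hr; set rho := Ae (Pn n') rho' _; move=> Hfeas Hcost Hr.
have Hnot := notin_neg (ltn0Sn n').
set n := n'.+1 in Hnot Hfeas Hcost Hr *.
have := HS _ _ (Ins (s - n%:R)) Hr Hnot => /= [[Hfeas2 [D [HD Hmod]] Hcost2]].
move: Hfeas2 Hmod Hcost2; set rho2 := Ae (Pn n) rho _; move=> Hfeas2 Hmod Hcost2.
have Hopt1 : cost alpha (Pn n) rho <= (1 + eps) * n%:R.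
  by apply: le_trans Hcost _; apply: ler_wpM2l; [lra|exact: (@Pn_chain alpha n a0)].
have Hopt2 : cost alpha ((s - n%:R)%R |` Pn n)%fset rho2 <= (1 + eps) * n%:R `^ alpha.
  by apply: le_trans Hcost2 _; apply: ler_wpM2l; [lra|exact: (@star_OPT alpha n a0 (ltn0Sn n'))].
case: (Hfeas2) => [[r2ge0 _] [par2 [Hp2 Hit2]]].
case: (Hfeas) => [[rge0 _] Harb].
have Hin' : s - n%:R \in ((s - n%:R)%R |` Pn n)%fset by rewrite fsetU11.
have Hne : s - n%:R != s.
  apply/eqP => E; have : s \in Pn n by apply/(in_Pn n s); exists 0%N; rewrite addr0.
  by rewrite -{1}E (negbTE Hnot).
have [Hpb Hedge] := Hp2 _ Hin' Hne.
have Hpbne : par2 (s - n%:R) != s - n%:R.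
  apply/negP => /eqP E; have [m Hm] := Hit2 _ Hin'.
  have : iter m par2 (s - n%:R) = s - n%:R by elim: m {Hm} => //= m ->.
  by rewrite Hm => E'; move: Hne; rewrite -E' eqxx.
move: Hpb; rewrite in_fsetU in_fset1 (negbTE Hpbne) /= => Hpb.
have [jb [Hjb Ejb]] := (iffLR (in_Pn n _)) Hpb.
rewrite Ejb in Hedge.
have Hbig : n%:R <= rho2 (s + jb%:R).
  apply: le_trans Hedge.
  have -> : s + jb%:R - (s - n%:R) = (jb + n)%:R by rewrite natrD; lra.
  by rewrite normr_nat ler_nat leq_addl.
have Hbigpow : n%:R `^ alpha <= rho2 (s + jb%:R) `^ alpha.
  by apply: ge0_ler_powR => //; [lra|rewrite nnegrE ler0n|rewrite nnegrE].
have jbn : (jb < n.+1)%N by rewrite ltnS.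
set r := fun j : nat => rho (s + j%:R).
set r2 := fun j : nat => rho2 (s + j%:R).
set D' := (par2 (s - n%:R) |` D)%fset.
pose b := fun j : nat => (((s + j%:R) \in D')%:R : R).
pose c := fun j : nat => covn n r j.
have Hcov : (n <= \sum_(j < n.+1) c j)%N := cov_sum (@coverage n rho Harb).
have HcovR : n%:R <= \sum_(j < n.+1) (c j)%:R :> R.
  have -> : \sum_(j < n.+1) ((c j)%:R : R) = (\sum_(j < n.+1) c j)%:R by rewrite natr_sum.
  by rewrite ler_nat.
have Hcount : \sum_(j < n.+1) b j <= K.+1%:R.
  apply: le_trans (count_D n D') _; rewrite ler_nat /D' cardfsU1.
  by case: (_ \notin _) => /=; rewrite ?add0n ?add1n //; apply: leqW.
have Hpt : forall j, (c j)%:R <= r j `^ alpha /\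
    (c j)%:R <= 1 + (r j `^ alpha - (c j)%:R) / d.
  by move=> j; apply: point_ineq => //; [exact: rge0|exact: (covn_le n (rge0 _)).1].
have Hold : \sum_(j < n.+1) r j `^ alpha <= (1 + eps) * n%:R.
  by move: Hopt1; rewrite /cost sum_Pn.
have Hnew : \sum_(j < n.+1) r2 j `^ alpha <= (1 + eps) * n%:R `^ alpha.
  move: Hopt2; rewrite /cost big_fsetU1 // sum_Pn => H.
  by apply: le_trans H; rewrite lerDr powR_ge0.
have b01 : forall j, b j = 0 \/ b j = 1 by move=> j; rewrite /b; case: (_ \in _); [right|left].
have Hsel : n%:R `^ alpha <= \sum_(j < n.+1) b j * r2 j `^ alpha.
  rewrite (bigD1 (Ordinal jbn)) //=.
  have -> : b jb = 1 by rewrite /b -Ejb fsetU11.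
  rewrite mul1r; apply: le_trans Hbigpow _; rewrite lerDl; apply: sumr_ge0 => j _.
  by apply: mulr_ge0; [rewrite /b ler0n|exact: powR_ge0].
have Hsame : forall j, (1 - b j) * r j `^ alpha = (1 - b j) * r2 j `^ alpha.
  move=> j; rewrite /b; case E: (_ \in D') => /=; first by rewrite subrr !mul0r.
  rewrite /r /r2 Hmod //; apply: contraFN E => HD'; rewrite /D' in_fsetU HD' orbT //.
have Hpoint : forall j, (c j)%:R <= b j + (r j `^ alpha - (c j)%:R) / d + (1 - b j) * r j `^ alpha.
  move=> j; have [H1 H2] := Hpt j.
  have He : 0 <= (r j `^ alpha - (c j)%:R) / d by apply: divr_ge0; [lra|exact: ltW].
  by case: (b01 j) => ->; lra.
have Hs : \sum_(j < n.+1) (c j)%:R <=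
   \sum_(j < n.+1) (b j + (r j `^ alpha - (c j)%:R) / d + (1 - b j) * r j `^ alpha).
  by apply: ler_sum => j _; exact: Hpoint.
rewrite !big_split /= -mulr_suml sumrB in Hs.
have E : \sum_(i < n.+1) (1 - b i) * r i `^ alpha =
    \sum_(i < n.+1) r2 i `^ alpha - \sum_(i < n.+1) b i * r2 i `^ alpha.
  by rewrite -sumrB; apply: eq_bigr => i _; rewrite Hsame mulrBl mul1r.
rewrite E in Hs.
have Hd : (\sum_(j < n.+1) r j `^ alpha - \sum_(j < n.+1) (c j)%:R) / d <= eps * n%:R / d.
  by rewrite ler_pM2r ?invr_gt0 //; lra.
lra.
Qed.

End Aux.

Unset Implicit Arguments.
Set Strict Implicit.

Theorem theorem4 (R : realType) (alpha : R) (halpha : 1 < alpha)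
    (s : R) (A : R -> update_algorithm R) (k : R -> nat) :
  SAS s alpha A k ->
  exists c : R, 0 < c /\ exists eps0 : R, 0 < eps0 /\
    forall eps : R, 0 < eps -> eps < eps0 ->
      c * (eps^-1) `^ ((alpha - 1)^-1) <= (k eps)%:R.
Proof.
move=> HSAS.
set a := (alpha - 1)^-1.
have a0 : 0 < a by rewrite /a invr_gt0; lra.
have aE : (alpha - 1) * a = 1 by rewrite /a mulfV //; apply/eqP; lra.
have d0 := delta_gt0 halpha.
set d := 2 `^ (alpha - 1) - 1 in d0 *.
have P6 : 0 < 6 `^ (alpha - 1) by apply: powR_gt0.
have P4 : 0 < 4 `^ a by apply: powR_gt0.
exists ((4 `^ a)^-1 / 4); split; first by rewrite divr_gt0 // invr_gt0.
exists (Num.min (d / 4) ((4 * 6 `^ (alpha - 1))^-1)); split.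
  by rewrite lt_min; apply/andP; split; [rewrite divr_gt0|rewrite invr_gt0 mulr_gt0].
move=> eps e0; rewrite lt_min => /andP [e1 e2].
have e2' : eps * (4 * 6 `^ (alpha - 1)) <= 1.
  by move: e2; rewrite -[X in _ < X]mul1r ltr_pdivlMr ?mulr_gt0 // => /ltW.
have Hinv : 6 `^ (alpha - 1) <= (4 * eps)^-1.
  by rewrite -[X in _ <= X]mul1r ler_pdivlMr ?mulr_gt0 //; lra.
set x := ((4 * eps)^-1) `^ a.
have x0 : 0 <= x by apply: powR_ge0.
have x6 : 6 <= x.
  have -> : 6 = (6 `^ (alpha - 1)) `^ a :> R by rewrite -powRrM aE powRr1.
  by apply: ge0_ler_powR; rewrite ?nnegrE; [exact: ltW|exact: ltW|rewrite invr_ge0 mulr_ge0 //; lra|].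
set n := Num.truncn x.
have Hn1 : n%:R <= x by rewrite truncn_le.
have Hn2 : x < n.+1%:R by apply: truncnS_gt.
have n0 : (0 < n)%N by rewrite -(ltr_nat R); rewrite -natr1 in Hn2; lra.
have Hc := core halpha e0 n0 (HSAS eps e0).
have Hxa : x `^ (alpha - 1) = (4 * eps)^-1 by rewrite /x -powRrM [a * _]mulrC aE powRr1 // invr_ge0 mulr_ge0 //; lra.
have Hna : n%:R `^ (alpha - 1) <= (4 * eps)^-1.
  rewrite -Hxa; apply: ge0_ler_powR; rewrite ?nnegrE //; lra.
have Hb1 : eps * n%:R `^ alpha <= n%:R / 4.
  rewrite -mulr_powRB1 //; last by lra.
  have : eps * n%:R `^ (alpha - 1) <= 1 / 4.
    apply: le_trans (_ : eps * (4 * eps)^-1 <= _); first by apply: ler_wpM2l => //; exact: ltW.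
    have -> : eps * (4 * eps)^-1 = 1 / 4 by field; apply/eqP; lra.
    by [].
  have n0' : 0 <= n%:R :> R by apply: ler0n.
  nra.
have Hb2 : eps * n%:R / d <= n%:R / 4.
  have : eps / d <= 1 / 4 by rewrite ler_pdivrMr //; lra.
  have n0' : 0 <= n%:R :> R by apply: ler0n.
  have -> : eps * n%:R / d = n%:R * (eps / d) by rewrite mulrAC mulrC mulrA.
  nra.
have -> : eps^-1 = 4 * (4 * eps)^-1 by rewrite invfM mulrA mulfV // mul1r.
rewrite powRM //; last by rewrite invr_ge0 mulr_ge0 //; lra.
have -> : (4 `^ a)^-1 / 4 * (4 `^ a * ((4 * eps)^-1) `^ a) = x / 4.
  by rewrite /x; field; apply/eqP; lra.
rewrite -natr1 in Hn2; rewrite -natr1 in Hc.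
lra.
Qed.
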